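(* Let $k\in\mathbb{N}$ and $(A,B,C)\in\mathsf{TCP}_d^k$. Then $M_{k-1}(B)$ and $M_{k-1}(C)$ are positive semidefinite.
   Context: For $v\in\mathbb{C}^d$, $\sigma(v)$ is the number of nonzero coordinates; $\odot$ is the entrywise product and $\bar v$ the entrywise conjugate. A triple $(A,B,C)$ of $d\times d$ complex matrices with equal diagonals lies in $\mathsf{TCP}_d^k$ if there are finitely many vectors $v_n,w_n\in\mathbb{C}^d$ with $\sigma(v_n\odot w_n)\le k$ for all $n$ and $A=\sum_n|v_n\odot\bar v_n\rangle\langle w_n\odot\bar w_n|$, $B=\sum_n|v_n\odot w_n\rangle\langle v_n\odot w_n|$, $C=\sum_n|v_n\odot\bar w_n\rangle\langle v_n\odot\bar w_n|$. For $X\in\mathcal{M}_d(\mathbb{C})$ and $m\ge0$, $M_m(X)$ has entries $M_m(X)_{ii}=m|X_{ii}|$ and $M_m(X)_{ij}=-|X_{ij}|$ for $i\ne j$. *)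

(* Defs.v *)
From HB Require Import structures.
From mathcomp Require Import all_boot all_order all_algebra.
From mathcomp Require Import complex.
From mathcomp Require Import reals.
Set Implicit Arguments. Unset Strict Implicit. Unset Printing Implicit Defensive.
Import Order.TTheory GRing.Theory Num.Theory.
Local Open Scope ring_scope.

Section Defs.
Variable C : numClosedFieldType.
Variable d : nat.

Definition sigma (v : 'cV[C]_d) : nat := #|[set i | v i ord0 != 0]|.

Definition hprod (v w : 'cV[C]_d) : 'cV[C]_d := \col_i (v i ord0 * w i ord0).
Definition vconj (v : 'cV[C]_d) : 'cV[C]_d := map_mx Num.conj v.

Definition adj {m n} (M : 'M[C]_(m, n)) : 'M[C]_(n, m) := (map_mx Num.conj M)^T.
Definition ketbra (v w : 'cV[C]_d) : 'M[C]_d := v *m adj w.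

Definition diag_eq (A B : 'M[C]_d) : Prop := forall i, A i i = B i i.

Definition TCP (k : nat) (A B C' : 'M[C]_d) : Prop :=
  diag_eq A B /\ diag_eq B C' /\
  exists (N : nat) (v w : 'I_N -> 'cV[C]_d),
    (forall n, (sigma (hprod (v n) (w n)) <= k)%N) /\
    A = \sum_(n < N) ketbra (hprod (v n) (vconj (v n))) (hprod (w n) (vconj (w n))) /\
    B = \sum_(n < N) ketbra (hprod (v n) (w n)) (hprod (v n) (w n)) /\
    C' = \sum_(n < N) ketbra (hprod (v n) (vconj (w n))) (hprod (v n) (vconj (w n))).

Definition Mmat (m : C) (X : 'M[C]_d) : 'M[C]_d :=
  \matrix_(i, j) (if i == j then m * `|X i i| else - `|X i j|).

Definition psd (M : 'M[C]_d) : Prop :=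
  adj M = M /\ forall x : 'cV[C]_d, 0 <= (adj x *m M *m x) ord0 ord0.
End Defs.

(* Main.v *)
Require Import Defs.
From HB Require Import structures.
From mathcomp Require Import all_boot all_order all_algebra.
From mathcomp Require Import complex reals.
Import Order.TTheory GRing.Theory Num.Theory.
Local Open Scope ring_scope.

Section S.
Variable C : numClosedFieldType.
Variable d : nat.

Lemma sum_diag (F : 'I_d -> C) i : \sum_j (if i == j then F j else 0) = F i.
Proof.
rewrite (bigD1 i) //= eqxx big1 ?addr0 // => j /negbTE; rewrite eq_sym => -> //.
Qed.

Lemma core (a : 'I_d -> C) (k : nat) : (forall i, 0 <= a i) ->
  (#|[set i | a i != 0%R]| <= k)%N ->
  \sum_i \sum_j (if i == j then (0:C) else a i * a j) <= (k%:R - 1) * \sum_i a i ^+ 2.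
Proof.
move=> a0 hk.
set S := [set i | a i != 0].
set s := \sum_i a i ^+ 2; set t := \sum_i a i.
have E1 : \sum_i \sum_j (if i == j then (0:C) else a i * a j) = t ^+ 2 - s.
  have H : forall i, \sum_j (if i == j then (0:C) else a i * a j) = a i * t - a i ^+ 2.
    move=> i; rewrite /t mulr_sumr (bigD1 i) //= eqxx add0r [in RHS](bigD1 i) //=.
    rewrite expr2 [X in X - _]addrC addrK; apply: eq_bigr => j hj.
    by rewrite eq_sym (negbTE hj).
  rewrite (eq_bigr _ (fun i _ => H i)) sumrB -mulr_suml expr2 //.
have sS : \sum_(i in S) a i ^+ 2 = s.
  rewrite big_mkcond; apply: eq_bigr => i _; rewrite inE.
  by case: eqP => // ->; rewrite expr0n.
have tS : \sum_(i in S) a i = t.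
  rewrite big_mkcond; apply: eq_bigr => i _; rewrite inE.
  by case: eqP => // ->.
have E2 : 0 <= \sum_(i in S) \sum_(j in S) (a i - a j) ^+ 2.
  apply: sumr_ge0 => i _; apply: sumr_ge0 => j _.
  rewrite -real_normK ?exprn_ge0 // realB // ger0_real //.
have E3 : \sum_(i in S) \sum_(j in S) (a i - a j) ^+ 2 = (s * #|S|%:R - t ^+ 2) *+ 2.
  have H : forall i, \sum_(j in S) (a i - a j) ^+ 2 = a i ^+ 2 *+ #|S| - (a i * t) *+ 2 + s.
    move=> i; under eq_bigr do rewrite sqrrB.
    rewrite big_split /= sumrB sumr_const sS; congr (_ - _ + _).
    by rewrite sumrMnl -mulr_sumr tS.
  rewrite (eq_bigr _ (fun i _ => H i)) big_split /= sumrB sumr_const !sumrMnl -mulr_suml sS tS.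
  rewrite mulrnBl expr2 addrAC -mulr2n mulr_natr; by [].
have E4 : t ^+ 2 <= s * #|S|%:R.
  by rewrite -subr_ge0 -(pmulrn_lge0 _ (isT : (0 < 2)%N)) -E3.
have s0 : 0 <= s by apply: sumr_ge0 => i _; rewrite exprn_ge0.
rewrite E1 mulrBl mul1r lerB // mulrC (le_trans E4) //.
by rewrite ler_wpM2l // ler_nat.
Qed.

Lemma conj_sum I (r : seq I) (F : I -> C) : (\sum_(i <- r) F i)^* = \sum_(i <- r) (F i)^*.
Proof. exact: rmorph_sum. Qed.
Lemma conj_mul (x y : C) : (x * y)^* = x^* * y^*.
Proof. exact: rmorphM. Qed.
Lemma conj_opp (x : C) : (- x)^* = - x^*.
Proof. exact: rmorphN. Qed.
Lemma conj_sub (x y : C) : (x - y)^* = x^* - y^*.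
Proof. exact: rmorphB. Qed.

Lemma main (k N : nat) (u : 'I_N -> 'cV[C]_d) :
  (forall n, (sigma (u n) <= k)%N) ->
  psd (Mmat (k%:R - 1) (\sum_(n < N) ketbra (u n) (u n))).
Proof.
move=> hs.
set X := \sum_(n < N) _.
set m : C := k%:R - 1.
have Xe : forall i j, X i j = \sum_n u n i ord0 * (u n j ord0)^*.
  move=> i j; rewrite /X summxE; apply: eq_bigr => n _.
  by rewrite !mxE big_ord1 !mxE.
have Xsym : forall i j, X j i = (X i j)^*.
  move=> i j; rewrite !Xe conj_sum; apply: eq_bigr => n _.
  by rewrite conj_mul conjCK mulrC.
have Xii : forall i, X i i = \sum_n `|u n i ord0| ^+ 2.
  by move=> i; rewrite Xe; apply: eq_bigr => n _; rewrite normCK.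
have mC : m^* = m by rewrite /m conj_sub conjC1 conjC_nat.
split.
  apply/matrixP => i j; rewrite !mxE.
  case: (eqVneq i j) => [->|ne]; first by rewrite ?eqxx conj_mul mC conj_normC.
  by rewrite conj_opp conj_normC Xsym norm_conjC.
move=> x.
set M := Mmat m X.
set y : 'I_d -> C := fun i => x i ord0.
have Q : (adj x *m M *m x) ord0 ord0 = \sum_i \sum_j (y i)^* * M i j * y j.
  rewrite mxE; under eq_bigr do rewrite mxE mulr_suml.
  rewrite exchange_big; apply: eq_bigr => i _; apply: eq_bigr => j _.
  by rewrite !mxE.
set Dt := fun i j => if i == j then m * `|X i i| * `|y i| ^+ 2 else 0.
set St := fun i j => if i == j then 0 else `|X i j| * ((y i)^* * y j).
set Tt := fun i j => if i == j then 0 else `|X i j| * (`|y i| * `|y j|).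
have QDS : forall i j, (y i)^* * M i j * y j = Dt i j - St i j.
  move=> i j; rewrite /M /Dt /St mxE; case: eqVneq => [->|_].
    by rewrite subr0 normCK mulrC [in RHS]mulrC -!mulrA.
  by rewrite sub0r mulrN mulNr mulrAC mulrC.
rewrite Q; under eq_bigr do under eq_bigr do rewrite QDS.
under eq_bigr do rewrite sumrB. rewrite sumrB subr_ge0.
have Sreal : (\sum_i \sum_j St i j) \is Num.real.
  rewrite CrealE; apply/eqP; rewrite conj_sum; under eq_bigr do rewrite conj_sum.
  rewrite exchange_big; apply: eq_bigr => i _; apply: eq_bigr => j _.
  rewrite /St eq_sym; case: eqVneq => _; first by rewrite conjC0.
  by rewrite conj_mul conj_normC conj_mul conjCK Xsym norm_conjC [y j * _]mulrC.
have ST : \sum_i \sum_j St i j <= \sum_i \sum_j Tt i j.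
  apply: le_trans (real_ler_norm Sreal) _.
  apply: le_trans (ler_norm_sum _ _ _) _; apply: ler_sum => i _.
  apply: le_trans (ler_norm_sum _ _ _) _; apply: ler_sum => j _.
  rewrite /St /Tt; case: eqVneq => _; first by rewrite normr0.
  by rewrite !normrM norm_conjC normr_id.
apply: le_trans ST _.
set a := fun n i => `|u n i ord0| * `|y i|.
have T1 : \sum_i \sum_j Tt i j <= \sum_n \sum_i \sum_j (if i == j then (0:C) else a n i * a n j).
  rewrite [X in _ <= X]exchange_big /=; apply: ler_sum => i _.
  rewrite [X in _ <= X]exchange_big /=; apply: ler_sum => j _.
  rewrite /Tt; case: eqVneq => _; first by rewrite big1.
  rewrite Xe; apply: le_trans (ler_wpM2r _ (ler_norm_sum _ _ _)) _.
    by rewrite mulr_ge0.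
  rewrite mulr_suml; apply: ler_sum => n _.
  by rewrite normrM norm_conjC mulrACA.
apply: le_trans T1 _.
have T2 : \sum_n \sum_i \sum_j (if i == j then (0:C) else a n i * a n j)
   <= \sum_n m * \sum_i a n i ^+ 2.
  apply: ler_sum => n _; apply: core.
    by move=> i; rewrite mulr_ge0.
  apply: leq_trans (hs n); apply: subset_leq_card; apply/subsetP => i.
  by rewrite !inE; apply: contra => /eqP H; rewrite /a H normr0 mul0r.
apply: le_trans T2 _; rewrite le_eqVlt; apply/orP; left; apply/eqP.
rewrite -mulr_sumr exchange_big mulr_sumr; apply: eq_bigr => i _.
rewrite /Dt (sum_diag (fun _ => m * `|X i i| * `|y i| ^+ 2) i).
rewrite -mulrA; congr (_ * _).
rewrite ger0_norm; last by rewrite Xii; apply: sumr_ge0 => n _; rewrite exprn_ge0.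
by rewrite Xii mulr_suml; apply: eq_bigr => n _; rewrite /a exprMn.
Qed.
Lemma sigma_conj (v w : 'cV[C]_d) :
  sigma (hprod v (vconj w)) = sigma (hprod v w).
Proof.
rewrite /sigma; apply: eq_card => i; rewrite !inE !mxE.
by rewrite !mulf_eq0 conjC_eq0.
Qed.
End S.

Theorem proposition3p12 (R : realType) (d k : nat) (A B C : 'M[R[i]]_d) :
  TCP k A B C ->
  psd (Mmat (k%:R - 1) B) /\ psd (Mmat (k%:R - 1) C).
Proof.
move=> [_ [_ [N [v [w [hs [_ [-> ->]]]]]]]]; split.
  exact: (@main _ _ k N (fun n => hprod (v n) (w n)) hs).
apply: (@main _ _ k N (fun n => hprod (v n) (vconj (w n)))) => n.
rewrite sigma_conj; exact: hs.
Qed.
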